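(* In the discrete-covariate setting below, assume Assumptions T and W. Fix $C_0\ge 1$ and let $\tilde\beta_j^l(\mathbf z)$ be a minimizer of $$\sum_{k=1}^n \mathrm w_l(\mathbf z_k)\,(\beta_j^*(\mathbf z_k)-\beta)^{\mathrm T}\,\Sigma^*_{-j,-j}(\mathbf z_k)\,(\beta_j^*(\mathbf z_k)-\beta)$$ over $\{\beta\in\mathbb R^{p-1}:\|\beta\|_0\le C_0s_j^*\}$. Then there is a constant $c>0$ such that for $j=1,\dots,p$ and every subject $l$ (with $n>n_l$), $$\|\tilde\beta_j^l(\mathbf z)-\beta_j^*(\mathbf z_l)\|_2^2\le c\,\exp\!\big(-2\delta_l^2/\tau^2+2\log(n/n_l-1)\big)\,s_j^*.$$
   Context: Discrete-covariate setting. There are $n$ subjects with covariates $\mathbf z_i$ taking $K$ distinct values (levels); $n_l$ denotes the number of subjects sharing the covariate value $\mathbf z_l$ of subject $l$. $\mathbf X\in\mathbb R^{n\times p}$ has rows $\mathbf x_i$; given the covariates, the $\mathbf x_i$ are independent with $\mathbf x_i\sim\mathcal N_p(0,\Omega^*(\mathbf z_i)^{-1})$; $\Sigma^*(\mathrm z)=\Omega^*(\mathrm z)^{-1}$, $\Sigma^*_{-j,-j}$ is it with row/column $j$ removed; $\beta_j^*(\mathrm z)\in\mathbb R^{p-1}$ is the true regression coefficient of variable $j$ on the others ($\beta^*_{jk}=-\Omega^*_{kj}/\Omega^*_{jj}$), with conditional variance $\sigma_*^2$ known. Weights: $\mathrm w_l(\mathbf z_k)=c_lK((\mathbf z_k-\mathbf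 z_l)/\tau)/\tau$, $c_l>0$ constant. $\tilde\beta^l_j$ as defined is the constrained Kullback–Leibler minimizer of the weighted pseudo-likelihood. $\delta_l=\min_{k:\mathbf z_k\ne\mathbf z_l}|\mathbf z_k-\mathbf z_l|$. Assumption T: for each covariate value $\mathrm z$, $\Omega^*(\mathrm z)$ has eigenvalues bounded away from $0$ and $\infty$, and $\|\beta_j^*(\mathrm z)\|_0\le s_j^*$; $s^*=\max_js_j^*$. Assumption W: $\delta_l$ is bounded below by a positive constant for all levels; the kernel is Gaussian, $K(x)\propto e^{-x^2}$; and $\tau=c\min_l\delta_l/\sqrt{\log n}$ for some constant $c\in(0,1)$. *)

(* Defs.v *)
From HB Require Import structures.
From mathcomp Require Import all_boot all_order all_algebra.
From mathcomp Require Import all_classical all_reals.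
From mathcomp Require Import all_analysis.
Set Implicit Arguments. Unset Strict Implicit. Unset Printing Implicit Defensive.
Import Order.TTheory GRing.Theory Num.Theory.
Local Open Scope ring_scope.

Section Defs.
Variable R : realType.

Definition l0norm (m : nat) (v : 'rV[R]_m) : nat := #|[set i | v 0 i != 0]|.

Definition sqnorm2 (m : nat) (v : 'rV[R]_m) : R := \sum_i (v 0 i) ^+ 2.

(* With p.+1 variables indexed by 'I_p.+1, the other variables of j are
   indexed by 'I_p via lift j. *)
Definition subm_mj (p : nat) (S : 'M[R]_p.+1) (j : 'I_p.+1) : 'M[R]_p :=
  \matrix_(a, b) S (lift j a) (lift j b).

(* beta*_j : regression coefficients of variable j on the others,
   beta*_{jk} = - Omega_{kj} / Omega_{jj}. *)
Definition beta_star (p : nat) (Om : 'M[R]_p.+1) (j : 'I_p.+1) : 'rV[R]_p :=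
  \row_a (- Om (lift j a) j / Om j j).

Definition Sigma_mj (p : nat) (Om : 'M[R]_p.+1) (j : 'I_p.+1) : 'M[R]_p :=
  subm_mj (invmx Om) j.

Definition qform (p : nat) (S : 'M[R]_p) (v : 'rV[R]_p) : R :=
  (v *m S *m v^T) 0 0.

Definition nlev (n : nat) (z : 'I_n -> R) (l : 'I_n) : nat :=
  #|[set k | z k == z l]|.

(* The default of the iterated
   minimum is max_k |z_k - z_l|, which is itself one of the gaps whenever some
   z_k <> z_l, so delta_l is the genuine minimum in that case. *)
Definition delta (n : nat) (z : 'I_n -> R) (l : 'I_n) : R :=
  \big[Num.min/(\big[Num.max/0]_k `|z k - z l|)]_(k | z k != z l) `|z k - z l|.

(* min_l delta_l (for n >= 1; default is max_l delta_l, itself a term) *)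
Definition min_delta (n : nat) (z : 'I_n -> R) : R :=
  \big[Num.min/(\big[Num.max/0]_l delta z l)]_l delta z l.

(* Gaussian kernel K(x) = exp(-x^2) (normalising constant absorbed in c_l) *)
Definition gaussK (x : R) : R := expR (- x ^+ 2).

Definition weight (n : nat) (z : 'I_n -> R) (cl : 'I_n -> R) (tau : R)
  (l k : 'I_n) : R := cl l * gaussK ((z k - z l) / tau) / tau.

Definition objective (n p : nat) (z : 'I_n -> R) (Om : R -> 'M[R]_p.+1)
  (cl : 'I_n -> R) (tau : R) (j : 'I_p.+1) (l : 'I_n) (b : 'rV[R]_p) : R :=
  \sum_k weight z cl tau l k *
     qform (Sigma_mj (Om (z k)) j) (beta_star (Om (z k)) j - b).

Definition constrained_minimizer (n p : nat) (z : 'I_n -> R)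
  (Om : R -> 'M[R]_p.+1) (cl : 'I_n -> R) (tau : R) (j : 'I_p.+1) (l : 'I_n)
  (C0 : R) (s : nat) (b : 'rV[R]_p) : Prop :=
  (l0norm b)%:R <= C0 * s%:R /\
  forall b' : 'rV[R]_p, (l0norm b')%:R <= C0 * s%:R ->
    objective z Om cl tau j l b <= objective z Om cl tau j l b'.

End Defs.

(* Main.v *)
From HB Require Import structures.
From mathcomp Require Import all_boot all_order all_algebra.
From mathcomp Require Import all_classical all_reals.
From mathcomp Require Import all_analysis.
From mathcomp Require Import complex.
From mathcomp Require Import ring lra zify.
Require Import Defs.
Import Order.TTheory GRing.Theory Num.Theory.
Set Implicit Arguments. Unset Strict Implicit. Unset Printing Implicit Defensive.
Local Open Scope ring_scope.
Section Spec.
Variable R : realType.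
Local Notation C := (R[i]).
Local Notation rc := (@real_complex_def R (Phant R)).
Local Notation cj := (@Num.conj C).

Lemma cj_rc (x : R) : cj (rc x) = rc x.
Proof. exact: conjc_real. Qed.

Lemma map_cj_rc m n (M : 'M[R]_(m, n)) : map_mx cj (map_mx rc M) = map_mx rc M.
Proof. by apply/matrixP => i j; rewrite !mxE cj_rc. Qed.

Lemma quad_diag n (w : 'rV[C]_n) (D : 'rV[C]_n) :
  (w *m diag_mx D *m (map_mx cj w^T)) 0 0 = \sum_i D 0 i * (w 0 i * cj (w 0 i)).
Proof.
rewrite mul_mx_diag !mxE; apply: eq_bigr => i _; rewrite !mxE.
by rewrite mulrCA mulrA.
Qed.

Lemma quad_id n (w : 'rV[C]_n) :
  (w *m (map_mx cj w^T)) 0 0 = \sum_i (w 0 i * cj (w 0 i)).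
Proof. by rewrite !mxE; apply: eq_bigr => i _; rewrite !mxE. Qed.

Lemma rc_entry m n (M : 'M[R]_(m, n)) i j : rc (M i j) = (map_mx rc M) i j.
Proof. by rewrite mxE. Qed.

Lemma herm_map m (A : 'M[R]_m) : A^T = A -> map_mx rc A \is hermsymmx.
Proof.
move=> sA; rewrite is_hermitianmxE expr0 scale1r; apply/eqP/matrixP => i j.
by rewrite !mxE cj_rc -[in LHS]sA mxE.
Qed.

Lemma eig_real m (A : 'M[R]_m) (k : R) : eigenvalue (map_mx rc A) (rc k) -> eigenvalue A k.
Proof.
by rewrite !eigenvalue_root_char -map_char_poly fmorph_root.
Qed.

Lemma spec_bound m (A : 'M[R]_m) (a b : R) :
  A^T = A -> (forall e, eigenvalue A e -> a <= e /\ e <= b) ->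
  forall y : 'rV[R]_m,
    a * (y *m y^T) 0 0 <= (y *m A *m y^T) 0 0 /\
    (y *m A *m y^T) 0 0 <= b * (y *m y^T) 0 0.
Proof.
move=> sA heig y.
set A' := map_mx rc A.
have hA := herm_map sA.
have /orthomx_spectralP HA := hermitian_normalmx hA.
set P := spectralmx A' in HA; set D := spectral_diag A' in HA.
have PU : P \is unitarymx := spectral_unitarymx A'.
have Pu : P \in unitmx := spectral_unit A'.
have iP : invmx P = map_mx cj P^T := invmx_unitary PU.
have Dreal : D \is a realmx := hermitian_spectral_diag_real hA.
have Deig : forall i, exists k, D 0 i = rc k /\ a <= k /\ k <= b.
  move=> i; have /mxOverP/(_ 0 i) /complex_realP [k Hk] := Dreal.
  exists k; split => //; apply: heig; apply: eig_real; rewrite -Hk.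
  apply/eigenvalueP; exists (delta_mx (0 : 'I_1) i *m P).
    rewrite {1}HA !mulmxA mulmxK //.
    have -> : delta_mx (0 : 'I_1) i *m diag_mx D = D 0 i *: delta_mx (0 : 'I_1) i.
      rewrite mul_mx_diag; apply/matrixP => r c; rewrite !mxE.
      rewrite mulrC; case: eqP => _; last by rewrite /= ?mulr0n ?mul0r ?mulr0.
      by case: eqP => [->|] /=; rewrite ?mulr0n ?mul0r ?mulr0.
    by rewrite -scalemxAl.
  apply/negP => /eqP /(congr1 (mulmx^~ (invmx P))); rewrite mulmxK // mul0mx.
  by move/matrixP/(_ 0 i); rewrite !mxE !eqxx /= => /eqP; rewrite oner_eq0.
set y' := map_mx rc y.
set w := y' *m map_mx cj P^T.
have wT : map_mx cj w^T = P *m y'^T.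
  apply/matrixP => r c; rewrite !mxE rmorph_sum; apply: eq_bigr => k _.
  by rewrite !mxE rmorphM /= conjCK cj_rc mulrC.
have H1 : rc ((y *m A *m y^T) 0 0) = \sum_i D 0 i * (w 0 i * cj (w 0 i)).
  rewrite -quad_diag wT rc_entry.
  rewrite !map_mxM map_trmx -[map_mx _ A]/(map_mx rc A) -[map_mx _ y]/y' HA iP.
  by rewrite !mulmxA.
have H2 : rc ((y *m y^T) 0 0) = \sum_i (w 0 i * cj (w 0 i)).
  rewrite -quad_id wT rc_entry.
  rewrite !map_mxM map_trmx -/y' /w.
  by rewrite -mulmxA (mulmxA _ P) -iP mulVmx // mul1mx.
have wge0 : forall i, 0 <= w 0 i * cj (w 0 i) by move=> i; exact: mulcJ_ge0.
split; rewrite -lecR rmorphM /= H1 H2 mulr_sumr; apply: ler_sum => i _;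
  have [k [-> [ak kb]]] := Deig i; apply: ler_wpM2r => //; by rewrite lecR.
Qed.
End Spec.
Section Help.
Variable R : realType.

Definition bil m (S : 'M[R]_m) (x y : 'rV[R]_m) : R := (x *m S *m y^T) 0 0.

Lemma qformE m (S : 'M[R]_m) v : qform S v = bil S v v.
Proof. by []. Qed.

Lemma bil_sym m (S : 'M[R]_m) x y : S^T = S -> bil S x y = bil S y x.
Proof.
move=> sS; rewrite /bil; have tr1 : forall M : 'M[R]_1, M 0 0 = M^T 0 0.
  by move=> M; rewrite mxE.
by rewrite tr1 !trmx_mul trmxK sS mulmxA.
Qed.

Lemma bilBl m (S : 'M[R]_m) x1 x2 y : bil S (x1 - x2) y = bil S x1 y - bil S x2 y.
Proof. by rewrite /bil !mulmxBl !mxE. Qed.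

Lemma bilBr m (S : 'M[R]_m) x y1 y2 : bil S x (y1 - y2) = bil S x y1 - bil S x y2.
Proof. by rewrite /bil linearB /= mulmxBr !mxE. Qed.

Lemma bilZl m (S : 'M[R]_m) t x y : bil S (t *: x) y = t * bil S x y.
Proof. by rewrite /bil -!scalemxAl !mxE. Qed.

Lemma bil0r m (S : 'M[R]_m) x : bil S x 0 = 0.
Proof. by rewrite /bil trmx0 mulmx0 mxE. Qed.

Lemma bil_exp m (S : 'M[R]_m) d u : S^T = S ->
  bil S (d - u) (d - u) = bil S d d - 2 * bil S u d + bil S u u.
Proof.
move=> sS; rewrite !bilBl !bilBr (bil_sym d u sS); ring.
Qed.

Lemma cs_bil m (S : 'M[R]_m) t x y : S^T = S -> (forall v, 0 <= bil S v v) ->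
  2 * t * bil S x y <= t ^+ 2 * bil S x x + bil S y y.
Proof.
move=> sS pS; have := pS (t *: x - y).
rewrite bilBl !bilBr !bilZl (bil_sym y (t *: x) sS) bilZl.
rewrite -subr_ge0 => H; rewrite -subr_ge0; move: H.
by rewrite (bil_sym x (t *: x) sS) bilZl; congr (0 <= _); ring.
Qed.

End Help.
Section Help2.
Variable R : realType.

Definition Emb p (j : 'I_p.+1) : 'M[R]_(p, p.+1) := \matrix_(a, i) (lift j a == i)%:R.

Lemma Emb_mul p (j : 'I_p.+1) n (M : 'M[R]_(p.+1, n)) a c :
  (Emb j *m M) a c = M (lift j a) c.
Proof.
rewrite mxE (bigD1 (lift j a)) //= mxE eqxx mul1r big1 ?addr0 // => i /negbTE.
by rewrite mxE eq_sym => ->; rewrite mul0r.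
Qed.

Lemma mul_EmbT p (j : 'I_p.+1) n (M : 'M[R]_(n, p.+1)) a c :
  (M *m (Emb j)^T) a c = M a (lift j c).
Proof.
rewrite mxE (bigD1 (lift j c)) //= !mxE eqxx mulr1 big1 ?addr0 // => i /negbTE.
by rewrite !mxE eq_sym => ->; rewrite mulr0.
Qed.

Lemma Emb_sub p (j : 'I_p.+1) (S : 'M[R]_p.+1) : Emb j *m S *m (Emb j)^T = subm_mj S j.
Proof. by apply/matrixP => a b; rewrite mul_EmbT Emb_mul mxE. Qed.

Lemma Emb_id p (j : 'I_p.+1) : Emb j *m (Emb j)^T = 1%:M :> 'M[R]_p.
Proof.
apply/matrixP => a b; rewrite mul_EmbT !mxE (inj_eq (@lift_inj _ j)).
by [].
Qed.

Lemma bil_sub p (j : 'I_p.+1) (S : 'M[R]_p.+1) x y :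
  bil (subm_mj S j) x y = bil S (x *m Emb j) (y *m Emb j).
Proof. by rewrite /bil -Emb_sub trmx_mul !mulmxA. Qed.

Lemma dot_Emb p (j : 'I_p.+1) (x : 'rV[R]_p) :
  ((x *m Emb j) *m (x *m Emb j)^T) 0 0 = (x *m x^T) 0 0.
Proof. by rewrite trmx_mul mulmxA -(mulmxA x) Emb_id mulmx1. Qed.

Lemma sqnorm2E m (v : 'rV[R]_m) : sqnorm2 v = (v *m v^T) 0 0.
Proof. by rewrite /sqnorm2 mxE; apply: eq_bigr => i _; rewrite mxE expr2. Qed.

Lemma sub_sym p (j : 'I_p.+1) (S : 'M[R]_p.+1) : S^T = S -> (subm_mj S j)^T = subm_mj S j.
Proof. by move=> sS; apply/matrixP => a b; rewrite !mxE -[in LHS]sS mxE. Qed.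

End Help2.
Arguments Emb {R p}.
Section Help3.
Variable R : realType.

Lemma om_unit n (Om : 'M[R]_n) lo hi : 0 < lo ->
  (forall e, eigenvalue Om e -> lo <= e /\ e <= hi) -> Om \in unitmx.
Proof.
move=> lo0 heig; rewrite -row_free_unit -kermx_eq0; apply/negPn/negP => Hk.
have : eigenvalue Om 0.
  rewrite /eigenvalue /eigenspace (_ : 0%:M = 0); last first.
    by apply/matrixP => i k; rewrite !mxE mul0rn.
  by rewrite subr0.
by move/heig => [/(lt_le_trans lo0)]; rewrite ltxx.
Qed.

Lemma inv_eig n (Om : 'M[R]_n) lo hi : 0 < lo ->
  (forall e, eigenvalue Om e -> lo <= e /\ e <= hi) ->
  forall mu, eigenvalue (invmx Om) mu -> hi^-1 <= mu /\ mu <= lo^-1.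
Proof.
move=> lo0 heig mu /eigenvalueP [v Hv vnz].
have Ou := om_unit lo0 heig.
have Hv2 : v = mu *: (v *m Om) by rewrite scalemxAl -Hv mulmxKV.
have mu0 : mu != 0 by apply: contraNneq vnz => mu0; rewrite Hv2 mu0 scale0r.
have : eigenvalue Om mu^-1.
  apply/eigenvalueP; exists v => //.
  by rewrite {2}Hv2 scalerA mulVf // scale1r.
move=> /heig [h1 h2].
have mup : 0 < mu^-1 := lt_le_trans lo0 h1.
have hip : 0 < hi := lt_le_trans mup h2.
rewrite -(invrK mu); split.
  by rewrite lef_pV2 ?posrE // invr_gt0.
by rewrite lef_pV2 ?posrE // invr_gt0.
Qed.

Lemma bil_delta n (S : 'M[R]_n) a b : bil S (delta_mx (0:'I_1) a) (delta_mx (0:'I_1) b) = S a b.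
Proof. by rewrite /bil trmx_delta -rowE -colE !mxE. Qed.

Lemma dot_delta n (a : 'I_n) : (delta_mx (0:'I_1) a *m (delta_mx (0:'I_1) a)^T) 0 0 = 1 :> R.
Proof.
by rewrite trmx_delta -rowE !mxE !eqxx.
Qed.

End Help3.
Section Help4.
Variable R : realType.

Lemma sq_supp m (v : 'rV[R]_m) K : (forall a, (v 0 a) ^+ 2 <= K) ->
  sqnorm2 v <= (l0norm v)%:R * K.
Proof.
move=> hK; rewrite /sqnorm2 /l0norm (bigID (fun i => v 0 i != 0)) /=.
rewrite [X in _ + X]big1 ?addr0; last by move=> i /negPn/eqP ->; rewrite expr0n.
rewrite (eq_bigl (fun i => i \in [set i | v 0 i != 0])); last by move=> i; rewrite inE.
apply: le_trans (ler_sum _ (fun i _ => hK i)) _.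
by rewrite sumr_const mulr_natl.
Qed.

Lemma om_bounds p (Om : 'M[R]_p.+1) lo hi (j : 'I_p.+1) : 0 < lo -> Om^T = Om ->
  (forall e, eigenvalue Om e -> lo <= e /\ e <= hi) ->
  [/\ (Sigma_mj Om j)^T = Sigma_mj Om j,
     forall x, hi^-1 * (x *m x^T) 0 0 <= bil (Sigma_mj Om j) x x,
     forall x, bil (Sigma_mj Om j) x x <= lo^-1 * (x *m x^T) 0 0,
     0 < hi &
     sqnorm2 (beta_star Om j) <= (l0norm (beta_star Om j))%:R * (hi^+2 / lo^+2)].
Proof.
move=> lo0 sO heig.
have sI : (invmx Om)^T = invmx Om by rewrite trmx_inv sO.
have hS := spec_bound sI (inv_eig lo0 heig).
have hO := spec_bound sO heig.
have hdiag : forall a, lo <= Om a a /\ Om a a <= hi.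
  move=> a; have [h1 h2] := hO (delta_mx 0 a).
  by move: h1 h2; rewrite -/(bil Om _ _) bil_delta dot_delta !mulr1.
have hi0 : 0 < hi by have [h1 h2] := hdiag j; exact: (lt_le_trans lo0 (le_trans h1 h2)).
have pO : forall v, 0 <= bil Om v v.
  move=> v; have [h1 _] := hO v; apply: le_trans h1.
  apply: mulr_ge0; first exact: ltW.
  by rewrite -sqnorm2E; apply: sumr_ge0 => i _; apply: sqr_ge0.
have hoff : forall a b, (Om a b) ^+ 2 <= hi ^+ 2.
  move=> a b.
  have c1 := cs_bil 1 (delta_mx 0 a) (delta_mx 0 b) sO pO.
  have c2 := cs_bil (-1) (delta_mx 0 a) (delta_mx 0 b) sO pO.
  move: c1 c2; rewrite !bil_delta; have [_ ha] := hdiag a; have [_ hb] := hdiag b.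
  move=> c1 c2; nra.
split => //.
- by rewrite /Sigma_mj sub_sym.
- move=> x; rewrite /Sigma_mj bil_sub -(dot_Emb j x); have [h1 _] := hS (x *m Emb j).
  exact: h1.
- move=> x; rewrite /Sigma_mj bil_sub -(dot_Emb j x); have [_ h2] := hS (x *m Emb j).
  exact: h2.
apply: sq_supp => a; rewrite mxE mulNr sqrrN expr_div_n.
have [hjl _] := hdiag j.
have Ojp : 0 < Om j j := lt_le_trans lo0 hjl.
apply: ler_pM; first exact: sqr_ge0.
- by rewrite invr_ge0 sqr_ge0.
- exact: hoff.
rewrite lef_pV2 ?posrE ?exprn_gt0 //.
by nra.
Qed.

End Help4.
Section Help5.
Variable R : realType.

Lemma key (a B Wn M U X : R) : 0 < a -> 0 < B -> 0 <= Wn -> 0 <= U -> 0 <= M ->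
  a * U <= X -> (forall t, 0 < t -> t * X <= B * (t ^+ 2 * Wn * U + Wn * M)) ->
  U * a ^+ 2 <= 4 * B ^+ 2 * Wn ^+ 2 * M.
Proof.
move=> a0 B0 W0 U0 M0 hX ht.
have [Wz|Wp] := eqVneq Wn 0.
  rewrite Wz in ht *.
  have := ht 1 ltr01; rewrite expr1n !(mulr0, mul0r, mul1r, addr0) => X0.
  have aU0 : a * U <= 0 := le_trans hX X0.
  have -> : U = 0.
    apply/eqP; rewrite eq_le U0 andbT.
    by rewrite -(pmulr_rle0 _ a0).
  by rewrite mul0r expr0n /= mulr0 mul0r.
have Wn0 : 0 < Wn by rewrite lt_def Wp W0.
set t := a / (2 * B * Wn).
have tp : 0 < t by rewrite divr_gt0 // !mulr_gt0.
have ta : a = 2 * t * B * Wn.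
  rewrite /t; field; apply/andP; split; [exact: lt0r_neq0|exact: lt0r_neq0].
have h := ht t tp.
have h2 : t * (a * U) <= B * (t ^+ 2 * Wn * U + Wn * M).
  by apply: le_trans h; rewrite ler_pM2l.
move: h2; rewrite ta => h2.
have h3 : B * Wn * (t ^+ 2 * U) <= B * Wn * M by nra.
have h4 : t ^+ 2 * U <= M by rewrite -(ler_pM2l (mulr_gt0 B0 Wn0)).
have e : U * (2 * t * B * Wn) ^+ 2 = 4 * B ^+ 2 * Wn ^+ 2 * (t ^+ 2 * U) by ring.
rewrite e; apply: ler_wpM2l => //.
by apply/mulr_ge0; [apply/mulr_ge0; [lra | exact: sqr_ge0] | exact: sqr_ge0].
Qed.

Lemma bigmin_le (I : finType) (P : pred I) (F : I -> R) x0 i :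
  P i -> \big[Num.min/x0]_(k | P k) F k <= F i.
Proof.
move=> Pi; rewrite (bigD1 i) //=.
by rewrite ge_min lexx.
Qed.

Lemma le_bigmax (I : finType) (F : I -> R) i :
  F i <= \big[Num.max/0]_k F k.
Proof.
by rewrite (bigD1 i) //= le_max lexx.
Qed.

Lemma ge_bigmin (I : finType) (P : pred I) (F : I -> R) x0 c :
  c <= x0 -> (forall i, P i -> c <= F i) -> c <= \big[Num.min/x0]_(k | P k) F k.
Proof.
move=> h0 hF; elim/big_ind: _ => //.
  by move=> x y hx hy; rewrite le_min hx hy.
Qed.

End Help5.
Section Help6.
Variable R : realType.

Lemma sum_same n (z : 'I_n -> R) l (x : R) :
  \sum_(k | z k == z l) x = x * (nlev z l)%:R.
Proof.
rewrite (eq_bigl (fun k => k \in [set k | z k == z l])); last by move=> k; rewrite inE.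
by rewrite sumr_const mulr_natr.
Qed.

Lemma sum_far n (z : 'I_n -> R) l (x : R) :
  \sum_(k | z k != z l) x = x * (n - nlev z l)%:R.
Proof.
rewrite (eq_bigl (fun k => k \in ~: [set k | z k == z l])); last by move=> k; rewrite !inE.
rewrite sumr_const mulr_natr; congr (_ *+ _).
have h := cardsC [set k | z k == z l]; rewrite card_ord in h.
rewrite /nlev; lia.
Qed.

End Help6.
Lemma sq_sub_le (R : realType) m (x y : 'rV[R]_m) :
  sqnorm2 (x - y) <= 2 * sqnorm2 x + 2 * sqnorm2 y.
Proof.
rewrite /sqnorm2 !mulr_sumr -big_split /=; apply: ler_sum => i _.
rewrite !mxE -subr_ge0.
set a := x 0 i; set b := y 0 i.
have -> : 2 * a ^+ 2 + 2 * b ^+ 2 - (a - b) ^+ 2 = (a + b) ^+ 2 by ring.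
exact: sqr_ge0.
Qed.

Unset Implicit Arguments. Set Strict Implicit.
Theorem lemma2 (R : realType)
  (lam_lo lam_hi C0 delta0 ctau : R)
  (Hlam : 0 < lam_lo) (HC0 : 1 <= C0) (Hdelta0 : 0 < delta0)
  (Hctau : 0 < ctau) (Hctau1 : ctau < 1) :
  exists c : R, 0 < c /\
  forall (n p : nat) (z : 'I_n -> R) (Om : R -> 'M[R]_p.+1)
         (s : 'I_p.+1 -> nat) (cl : 'I_n -> R) (tau : R),
    (* Assumption T *)
    (forall i : 'I_n, (Om (z i))^T = Om (z i)) ->
    (forall (i : 'I_n) (a : R), eigenvalue (Om (z i)) a ->
        lam_lo <= a /\ a <= lam_hi) ->
    (forall (i : 'I_n) (j : 'I_p.+1), (l0norm (beta_star (Om (z i)) j) <= s j)%N) ->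
    (* Assumption W *)
    (forall l : 'I_n, delta0 <= delta z l) ->
    tau = ctau * min_delta z / Num.sqrt (ln n%:R) ->
    (* weights w_l(z_k) = c_l K((z_k - z_l)/tau)/tau, c_l > 0 *)
    (forall l : 'I_n, 0 < cl l) ->
    forall (j : 'I_p.+1) (l : 'I_n), (nlev z l < n)%N ->
    forall bt : 'rV[R]_p,
      constrained_minimizer z Om cl tau j l C0 (s j) bt ->
      sqnorm2 (bt - beta_star (Om (z l)) j)
        <= c * expR (- 2 * delta z l ^+ 2 / tau ^+ 2
                     + 2 * ln (n%:R / (nlev z l)%:R - 1)) * (s j)%:R.
Proof.
set c := 16 * (lam_hi ^+ 4 / lam_lo ^+ 4) + 1.
have c0 : 0 <= lam_hi ^+ 4 / lam_lo ^+ 4.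
  by rewrite divr_ge0 ?exprn_even_ge0 // ltW // exprn_gt0.
exists c; split; first by rewrite /c; lra.
move=> n p z Om s cl tau Hsym Heig Hs Hdel Htau Hcl j l Hnl bt [Hbt0 Hmin].
set lo := lam_lo; set hi := lam_hi.
have Bd : forall k : 'I_n, _ := fun k => om_bounds j Hlam (Hsym k) (Heig k).
have hi0 : 0 < hi by have [_ _ _ h _] := Bd l.
set nl := nlev z l.
have nl1 : (1 <= nl)%N.
  by rewrite /nl /nlev card_gt0; apply/set0Pn; exists l; rewrite inE.
have n2 : (2 <= n)%N by apply: leq_ltn_trans Hnl.
have lnp : 0 < ln (n%:R : R) by apply: ln_gt0; rewrite ltr1n.
have md : delta0 <= min_delta z.
  apply: (@ge_bigmin _ _ xpredT) => [|i _]; last exact: Hdel.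
  exact: le_trans (Hdel l) (le_bigmax _ l).
have tau0 : 0 < tau.
  rewrite Htau divr_gt0 ?sqrtr_gt0 // mulr_gt0 //; exact: lt_le_trans Hdelta0 md.
set g := cl l / tau.
have g0 : 0 < g by rewrite divr_gt0.
set E := expR (- (delta z l ^+ 2 / tau ^+ 2)).
set w := fun k => weight z cl tau l k.
have wE : forall k, w k = g * gaussK ((z k - z l) / tau).
  by move=> k; rewrite /w /weight /g mulrAC.
have w0 : forall k, 0 <= w k.
  by move=> k; rewrite wE; apply: mulr_ge0; [exact: ltW | exact: expR_ge0].
have wsame : forall k, z k == z l -> w k = g.
  by move=> k /eqP zk; rewrite wE zk subrr mul0r /gaussK expr0n /= oppr0 expR0 mulr1.
have wfar : forall k, z k != z l -> w k <= g * E.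
  move=> k zk; rewrite wE ler_pM2l // /gaussK /E ler_expR lerN2 expr_div_n.
  apply: ler_wpM2r; first by rewrite invr_ge0 sqr_ge0.
  have h1 : delta z l <= `|z k - z l| by apply: bigmin_le.
  have h2 : 0 <= delta z l := le_trans (ltW Hdelta0) (Hdel l).
  have h3 := real_normK (num_real (z k - z l)).
  rewrite -h3; nra.
set bl := beta_star (Om (z l)) j.
set u := bt - bl.
set U := sqnorm2 u.
pose S k := Sigma_mj (Om (z k)) j.
pose d k := beta_star (Om (z k)) j - bl.
have Hl0 : (l0norm bl)%:R <= C0 * (s j)%:R.
  apply: (le_trans _ (ler_peMl (ler0n _ _) HC0)); rewrite ler_nat; exact: Hs.
have Hmin' := Hmin bl Hl0.
have Ssym : forall k, (S k)^T = S k by move=> k; have [h _ _ _ _] := Bd k.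
have qlow : forall k v, hi^-1 * sqnorm2 v <= bil (S k) v v.
  by move=> k v; have [_ h _ _ _] := Bd k; rewrite sqnorm2E; exact: h.
have qup : forall k v, bil (S k) v v <= lo^-1 * sqnorm2 v.
  by move=> k v; have [_ _ h _ _] := Bd k; rewrite sqnorm2E; exact: h.
have sq0 : forall m (v : 'rV[R]_m), 0 <= sqnorm2 v.
  by move=> m v; apply: sumr_ge0 => i _; exact: sqr_ge0.
have qpos : forall k v, 0 <= bil (S k) v v.
  move=> k v; apply: le_trans (qlow k v); apply: mulr_ge0 (sq0 _ v).
  by rewrite invr_ge0 ltW.
have hX : \sum_k w k * bil (S k) u u <= \sum_k w k * (2 * bil (S k) u (d k)).
  move: Hmin'; rewrite /objective.
  have eqk : forall k, weight z cl tau l k *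
      qform (Sigma_mj (Om (z k)) j) (beta_star (Om (z k)) j - bt) =
      w k * qform (S k) (d k) + (w k * bil (S k) u u - w k * (2 * bil (S k) u (d k))).
    move=> k; have -> : beta_star (Om (z k)) j - bt = d k - u.
      by rewrite /d /u opprB addrA subrK.
    rewrite !qformE (bil_exp (d k) u (Ssym k)) /w.
    set A1 := bil _ (d k) (d k); set A2 := bil _ u (d k); set A3 := bil _ u u.
    set W1 := weight _ _ _ _ _; clearbody A1 A2 A3 W1; ring.
  have eqk2 : forall k, weight z cl tau l k *
      qform (Sigma_mj (Om (z k)) j) (beta_star (Om (z k)) j - bl) =
      w k * qform (S k) (d k) by [].

  rewrite (eq_bigr _ (fun k _ => eqk k)) (eq_bigr _ (fun k _ => eqk2 k)) big_split /=.
  rewrite sumrB; lra.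
set a := nl%:R * g * hi^-1.
have LB : a * U <= \sum_k w k * bil (S k) u u.
  rewrite (bigID (fun k => z k == z l)) /=.
  apply: le_trans (_ : \sum_(k | z k == z l) w k * bil (S k) u u <= _); last first.
    rewrite lerDl; apply: sumr_ge0 => k _; exact: mulr_ge0 (w0 k) (qpos k u).
  rewrite (eq_bigr (fun _ => g * bil (S l) u u)); last first.
    by move=> k zk; rewrite wsame // /S (eqP zk).
  rewrite sum_same -/nl /a.
  have := qlow l u; rewrite -/U => h.
  have : g * (hi^-1 * U) <= g * bil (S l) u u by rewrite ler_pM2l.
  have nl0 : 0 <= (nl%:R : R) by [].
  nra.
have Xfar : \sum_k w k * (2 * bil (S k) u (d k)) =
    \sum_(k | z k != z l) w k * (2 * bil (S k) u (d k)).
  rewrite (bigID (fun k => z k == z l)) /= big1 ?add0r // => k zk.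
  have -> : d k = 0 by rewrite /d /bl (eqP zk) subrr.
  by rewrite bil0r mulr0 mulr0.
set X := \sum_k w k * (2 * bil (S k) u (d k)).
set Wn := \sum_(k | z k != z l) w k.
set M := 4 * (s j)%:R * (hi ^+ 2 / lo ^+ 2).
have hb : forall k, sqnorm2 (beta_star (Om (z k)) j) <= (s j)%:R * (hi ^+ 2 / lo ^+ 2).
  move=> k; have [_ _ _ _ h] := Bd k; apply: le_trans h _; apply: ler_wpM2r.
    by rewrite divr_ge0 ?sqr_ge0.
  by rewrite ler_nat; exact: Hs.
have dM : forall k, sqnorm2 (d k) <= M.
  move=> k; apply: le_trans (sq_sub_le _ _) _.
  have h1 := hb k; have h2 : sqnorm2 bl <= (s j)%:R * (hi ^+ 2 / lo ^+ 2) := hb l.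
  rewrite /M; lra.
have loi0 : 0 < lo^-1 by rewrite invr_gt0.
have tX : forall t, 0 < t -> t * X <= lo^-1 * (t ^+ 2 * Wn * U + Wn * M).
  move=> t tp.
  have -> : lo^-1 * (t ^+ 2 * Wn * U + Wn * M) =
      \sum_(k | z k != z l) w k * (lo^-1 * (t ^+ 2 * U + M)).
    by rewrite -mulr_suml -/Wn; ring.
  rewrite /X Xfar mulr_sumr; apply: ler_sum => k _.
  have -> : t * (w k * (2 * bil (S k) u (d k))) = w k * (2 * t * bil (S k) u (d k)) by ring.
  apply: ler_wpM2l; first exact: w0 k.
  have h1 := cs_bil t u (d k) (Ssym k) (qpos k).
  have h2 := qup k u; have h3 := qup k (d k); have h4 := dM k.
  have h5 : t ^+ 2 * bil (S k) u u <= t ^+ 2 * (lo^-1 * U).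
    by apply: ler_wpM2l; [exact: sqr_ge0 | exact: h2].
  have h6 : lo^-1 * sqnorm2 (d k) <= lo^-1 * M by rewrite ler_pM2l.
  move: h1 h5 h3 h6; rewrite -/U.
  set Q1 := bil _ u (d k); set Q2 := bil _ u u; set Q3 := bil _ (d k) (d k).
  move=> h1 h5 h3 h6; nra.
have nl0 : 0 < (nl%:R : R) by rewrite ltr0n.
have a0 : 0 < a by rewrite /a !mulr_gt0 // invr_gt0.
have W0 : 0 <= Wn by apply: sumr_ge0 => k _; exact: w0 k.
have U0 : 0 <= U := sq0 _ u.
have M0 : 0 <= M.
  rewrite /M; apply: mulr_ge0; [apply: mulr_ge0; [lra|exact: ler0n] | by rewrite divr_ge0 ?sqr_ge0].
have K := key a0 loi0 W0 U0 M0 (le_trans LB hX) tX.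
set Wb := g * E * (n - nl)%:R.
have Wle : Wn <= Wb.
  rewrite /Wn /Wb -sum_far; apply: ler_sum => k zk; exact: wfar.
have Wsq : Wn ^+ 2 <= Wb ^+ 2 by nra.
set r := n%:R / nl%:R - 1.
have rE : r = (n - nl)%:R / nl%:R.
  rewrite /r natrB; last exact: ltnW.
  by field; rewrite lt0r_neq0.
have r0 : 0 < r.
  by rewrite rE divr_gt0 // ltr0n subn_gt0.
have E0 : 0 <= E by exact: expR_ge0.
have -> : - 2 * delta z l ^+ 2 / tau ^+ 2 + 2 * ln r = 2%:R * (- (delta z l ^+ 2 / tau ^+ 2)) + 2%:R * ln r.
  by ring.
rewrite expRD !expRM_natl lnK ?posrE // -/E.
set T := 16 * (hi ^+ 4 / lo ^+ 4) * (E ^+ 2 * r ^+ 2) * (s j)%:R.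
have eT : 4 * lo^-1 ^+ 2 * Wb ^+ 2 * M = T * a ^+ 2.
  rewrite /T rE /Wb /M /a; field.
  by rewrite !lt0r_neq0.
have UT : U <= T.
  rewrite -(ler_pM2r (exprn_gt0 2 a0)) -eT; apply: le_trans K _.
  apply: ler_wpM2r => //; apply: ler_wpM2l => //.
  by apply: mulr_ge0; [lra | exact: sqr_ge0].
apply: le_trans UT _.
have Y0 : 0 <= E ^+ 2 * r ^+ 2 * (s j)%:R.
  by apply: mulr_ge0; [apply: mulr_ge0; exact: sqr_ge0 | exact: ler0n].
rewrite /T /c -/hi -/lo; nra.
Qed.
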